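(* Fix constants $\lambda>0$ and $\epsilon>0$. For each $n$, let $k=\frac{\lambda n}{\log n}$ be the number of defectives, and let the defective set $\mathcal{K}\subseteq\{1,\dots,n\}$ be drawn uniformly at random among all subsets of size $k$ (combinatorial prior). Let $$T=(1+\epsilon)\frac{\lambda}{\log^2 2}\,n$$ and form a near-constant tests-per-item design with $T$ tests: each of the $n$ items, independently, draws $L=\frac{T\log 2}{k}$ tests uniformly at random with replacement from the $T$ tests and is included in each drawn test. Then the probability that the COMP decoder outputs exactly $\mathcal{K}$ is $1-o(1)$ as $n\to\infty$.
   Context: $\log$ denotes the natural logarithm. Nonadaptive group testing: a test is a subset of items, and its outcome is positive iff it contains at least one defective item (the logical OR of the defectivity indicators of its items). All tests are fixed before any outcomes are seen. The COMP decoder declares every item that appears in at least one negative test to be nondefective, and declares all remaining items defective. *)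

(* Defs.v *)
From HB Require Import structures.
From mathcomp Require Import all_boot all_order all_algebra.
From mathcomp Require Import all_classical all_reals all_analysis.
Set Implicit Arguments. Unset Strict Implicit. Unset Printing Implicit Defensive.
Import Order.TTheory GRing.Theory Num.Theory.
Local Open Scope ring_scope.

Definition kdef (R : realType) (lam : R) (n : nat) : nat :=
  Num.truncn (lam * n%:R / ln (n%:R : R)).

Definition Tdef (R : realType) (lam eps : R) (n : nat) : nat :=
  Num.truncn ((1 + eps) * lam / (ln (2 : R)) ^+ 2 * n%:R).

Definition Ldef (R : realType) (lam eps : R) (n : nat) : nat :=
  Num.truncn ((Tdef lam eps n)%:R * ln (2 : R) / (kdef lam n)%:R).

(* A near-constant tests-per-item design: item x draws tests X x j, j < L,
   uniformly with replacement from the T tests. *)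
Definition design (n L T : nat) := {ffun 'I_n -> {ffun 'I_L -> 'I_T}}.

Definition in_test (n L T : nat) (X : design n L T) (x : 'I_n) (t : 'I_T) : bool :=
  [exists j : 'I_L, X x j == t].

Definition test_positive (n L T : nat) (X : design n L T) (K : {set 'I_n}) (t : 'I_T) : bool :=
  [exists y in K, in_test X y t].

Definition comp_output (n L T : nat) (X : design n L T) (K : {set 'I_n}) : {set 'I_n} :=
  [set x | [forall t : 'I_T, in_test X x t ==> test_positive X K t]].

Definition comp_success_prob (R : realType) (n k L T : nat) : R :=
  (#|[set p : {set 'I_n} * design n L T | (#|p.1| == k) && (comp_output p.2 p.1 == p.1)]|)%:R
  / (#|[set K : {set 'I_n} | #|K| == k]| * #|[set: design n L T]|)%:R.

Definition comp_prob (R : realType) (lam eps : R) (n : nat) : R :=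
  comp_success_prob R n (kdef lam n) (Ldef lam eps n) (Tdef lam eps n).

(* Main.v *)
Require Import Defs.
From HB Require Import structures.
From mathcomp Require Import all_boot all_order all_algebra.
From mathcomp Require Import all_classical all_reals all_analysis.
From mathcomp Require Import lra ring zify.
Import Order.TTheory GRing.Theory Num.Theory.
Import numFieldNormedType.Exports.
Local Open Scope ring_scope.
Set Implicit Arguments. Unset Strict Implicit. Unset Printing Implicit Defensive.

Definition upd n L T (X : design n L T) (y : 'I_n) (i : 'I_L) (t : 'I_T) : design n L T :=
  [ffun z => if z == y then [ffun j => if j == i then t else X z j] else X z].

Lemma upd_yi n L T (X : design n L T) y i t : upd X y i t y i = t.
Proof. by rewrite /upd ffunE eqxx ffunE eqxx. Qed.

Lemma upd_neq n L T (X : design n L T) y i t z j : (z != y) || (j != i) -> upd X y i t z j = X z j.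
Proof. by rewrite /upd ffunE; case: eqP => //= -> ; rewrite ffunE; case: eqP. Qed.

Lemma upd_upd n L T (X : design n L T) y i a b : upd (upd X y i a) y i b = upd X y i b.
Proof.
apply/ffunP => z; apply/ffunP => j; rewrite /upd !ffunE.
case: eqP => // ->; rewrite !ffunE; by case: eqP.
Qed.

Lemma upd_id n L T (X : design n L T) y i : upd X y i (X y i) = X.
Proof.
apply/ffunP => z; apply/ffunP => j; rewrite /upd !ffunE.
case: eqP => // ->; rewrite !ffunE; by case: eqP => // ->.
Qed.

Definition sw T (s t v : 'I_T) := if v == s then t else if v == t then s else v.

Lemma swK T (s t : 'I_T) : involutive (sw s t).
Proof. move=> v; rewrite /sw; do !case: eqP => //; congruence. Qed.

Lemma sw_eq T (s t v : 'I_T) : (sw s t v == t) = (v == s).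
Proof. rewrite /sw; do !case: eqP => //; congruence. Qed.

Lemma decouple_eq (R : realType) n L T y i (G : design n L T -> R) :
  (forall X s, G (upd X y i s) = G X) -> forall s t,
  \sum_(X : design n L T) ((X y i == t)%:R * G X) = \sum_(X : design n L T) ((X y i == s)%:R * G X).
Proof.
move=> HG s t.
pose sg X := upd X y i (sw s t (X y i)).
have sgK : involutive sg.
  by move=> X; rewrite /sg upd_yi upd_upd swK upd_id.
rewrite (reindex_inj (inv_inj sgK)) /=; apply: eq_bigr => X _.
by rewrite /sg upd_yi sw_eq HG.
Qed.

Lemma sum_ind (R : realType) T (v : 'I_T) : \sum_(s : 'I_T) ((v == s)%:R : R) = 1.
Proof.
rewrite (bigD1 v) //= eqxx big1 ?addr0 // => s /negbTE; by rewrite eq_sym => ->.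
Qed.

Lemma decouple (R : realType) n L T y i (G : design n L T -> R) :
  (forall X s, G (upd X y i s) = G X) -> forall t,
  \sum_(X : design n L T) ((X y i == t)%:R * G X) = (\sum_(X : design n L T) G X) / T%:R.
Proof.
move=> HG t.
have T0 : (0 < T)%N by case: T t y i G HG => [[]|].
have -> : \sum_(X : design n L T) G X = \sum_(s : 'I_T) \sum_(X : design n L T) ((X y i == s)%:R * G X).
  rewrite exchange_big /=; apply: eq_bigr => X _.
  by rewrite -mulr_suml sum_ind mul1r.
rewrite [in RHS](eq_bigr (fun _ => \sum_(X : design n L T) ((X y i == t)%:R * G X))); last first.
  move=> s _; exact: (decouple_eq HG t s).
rewrite sumr_const card_ord -[_ *+ T]mulr_natr mulfK //.
by rewrite pnatr_eq0 -lt0n.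
Qed.

Definition PS n L T (S : {set 'I_n * 'I_L}) (X : design n L T) : {set 'I_T} :=
  [set X p.1 p.2 | p in S].

Definition qq (R : realType) (T m : nat) : R := 1 - (1 - T%:R^-1) ^+ m.

Lemma qqS (R : realType) T m : qq R T m.+1 = qq R T m + (1 - qq R T m) / T%:R.
Proof. rewrite /qq exprS; set u := (1 - T%:R^-1) ^+ m. rewrite subKr. ring. Qed.

Lemma qq_ge0 (R : realType) T m : (0 < T)%N -> 0 <= qq R T m.
Proof.
move=> T0; rewrite /qq subr_ge0; apply: exprn_ile1.
  by rewrite subr_ge0 invf_le1 ?ltr0n // ler1n.
by rewrite lerBlDr lerDl invr_ge0.
Qed.

Lemma qq_le1 (R : realType) T m : (0 < T)%N -> qq R T m <= 1.
Proof.
move=> T0; rewrite /qq lerBlDr lerDl; apply: exprn_ge0.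
by rewrite subr_ge0 invf_le1 ?ltr0n // ler1n.
Qed.

Lemma bern (R : realType) (a b : R) d : 0 <= a -> 0 <= b ->
  a ^+ d + d%:R * a ^+ d.-1 * b <= (a + b) ^+ d.
Proof.
move=> a0 b0; elim: d => [|d IH]; first by rewrite !expr0 mul0r mul0r addr0.
rewrite exprS [X in _ <= X]exprS /=.
have h1 : 0 <= a + b by rewrite addr_ge0.
apply: le_trans (ler_wpM2l h1 IH).
case: d IH => [|d] IH.
  by rewrite /= !expr0 !mulr1 !mul1r !mul0r addr0 mulr1.
rewrite /= !exprS -!natr1.
have x0 : 0 <= a ^+ d by rewrite exprn_ge0.
set x := a ^+ d.
have d0 : 0 <= d%:R :> R by [].
have -> : (a + b) * (a * x + (d%:R + 1) * x * b) =
  a * (a * x) + (d%:R + 1 + 1) * (a * x) * b + (d%:R + 1) * x * b * b by ring.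
by rewrite lerDl !mulr_ge0 // addr_ge0.
Qed.



Lemma sub_U1 T (D B : {set 'I_T}) v : (D \subset v |: B) = (D :\ v \subset B).
Proof.
apply/idP/idP => /fintype.subsetP H; apply/fintype.subsetP => x.
  by rewrite in_setD1 => /andP [xv /H]; rewrite in_setU1 (negbTE xv).
rewrite in_setU1; case: eqP => //= xv xD; apply: H; rewrite in_setD1 xD andbT.
by apply/eqP.
Qed.

Lemma ind_split (R : realType) T (P : 'I_T -> R) v :
  P v = \sum_(t : 'I_T) ((v == t)%:R * P t).
Proof.
rewrite (bigD1 v) //= eqxx mul1r big1 ?addr0 // => s /negbTE.
by rewrite eq_sym => ->; rewrite mul0r.
Qed.

Lemma sum_cardD1 (R : realType) T (D : {set 'I_T}) (c : R) :
  \sum_(t : 'I_T) c ^+ #|D :\ t| = #|D|%:R * c ^+ #|D|.-1 + (T - #|D|)%:R * c ^+ #|D|.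
Proof.
rewrite (bigID (mem D)) /=.
rewrite (eq_bigr (fun _ => c ^+ #|D|.-1)); last first.
  by move=> t tD; rewrite (cardsD1 t D) tD.
rewrite [X in _ + X](eq_bigr (fun _ => c ^+ #|D|)); last first.
  by move=> t /negbTE tD; rewrite (cardsD1 t D) tD.
rewrite !sumr_const !mulr_natl; congr (_ *+ _ + _ *+ _).
have h : (#|D| + #|[predC D]|)%N = T by rewrite cardC card_ord.
have -> : #|(fun i : 'I_T => i \notin D)| = #|[predC D]| by apply: eq_card => x; rewrite !inE.
move: h; set x := #|[predC D]|; set y := #|D|; lia.
Qed.

Lemma PS_upd n L T (S : {set 'I_n * 'I_L}) (X : design n L T) y i s :
  (y, i) \notin S -> PS S (upd X y i s) = PS S X.
Proof.
move=> yiS; apply: eq_in_imset => p pS /=; rewrite upd_neq //.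
case: p pS => z j /= pS; rewrite -negb_and; apply/negP => /andP [/eqP zy /eqP ji].
by move: yiS; rewrite -zy -ji pS.
Qed.

Lemma step_ineq (R : realType) (T d : nat) (a : R) : (0 < T)%N -> (d <= T)%N ->
  0 <= a -> a <= 1 ->
  (d%:R * a ^+ d.-1 + (T - d)%:R * a ^+ d) / T%:R <= (a + (1 - a) / T%:R) ^+ d.
Proof.
move=> T0 dT a0 a1.
have Tp : 0 < T%:R :> R by rewrite ltr0n.
apply: le_trans (bern d a0 _); last by rewrite divr_ge0 ?subr_ge0 // ltW.
rewrite natrB //.
case: d dT => [|d] dT.
  by rewrite /= !mul0r add0r subr0 !expr0 mulr1 divff ?gt_eqF // addr0.
rewrite [a ^+ d.+1]exprS /=.
set x := a ^+ d.
rewrite le_eqVlt; apply/orP; left; apply/eqP; field.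
by rewrite gt_eqF.
Qed.

Lemma claimA (R : realType) n L T : (0 < T)%N -> forall m (S : {set 'I_n * 'I_L}) (D : {set 'I_T}),
  #|S| = m ->
  \sum_(X : design n L T) ((D \subset PS S X)%:R : R) <=
  #|{: design n L T}|%:R * qq R T m ^+ #|D|.
Proof.
move=> T0; elim=> [|m IH] S D Sm.
  have -> : S = finset.set0 by apply/eqP; rewrite -cards_eq0 Sm.
  case: (posnP #|D|) => [D0|Dp].
    rewrite D0 expr0 mulr1 -sum1_card natr_sum; apply: ler_sum => X _.
    by rewrite lern1 leq_b1.
  rewrite big1; last first.
    move=> X _; rewrite /PS imset0 finset.subset0.
    by rewrite -cards_eq0 (gtn_eqF Dp).
  by rewrite /qq expr0 subrr expr0n gtn_eqF // mulr0.
have [p pS] : exists p, p \in S.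
  by apply/finset.set0Pn; rewrite -card_gt0 Sm.
set S' := S :\ p.
have S'm : #|S'| = m by move: Sm; rewrite (cardsD1 p S) pS add1n => -[].
have pS' : p \notin S' by rewrite !inE eqxx.
have PSe : forall X : design n L T, PS S X = X p.1 p.2 |: PS S' X.
  by move=> X; rewrite /PS -{1}(finset.setD1K pS) imsetU1.
under eq_bigr => X _ do rewrite PSe sub_U1 (ind_split (fun t => ((D :\ t \subset PS S' X)%:R : R)) (X p.1 p.2)).
rewrite exchange_big /=.
have dec : forall t, \sum_(X : design n L T) ((X p.1 p.2 == t)%:R * ((D :\ t \subset PS S' X)%:R : R)) = (\sum_(X : design n L T) ((D :\ t \subset PS S' X)%:R : R)) / T%:R.
  by move=> t; apply: decouple => X s; rewrite PS_upd // -surjective_pairing.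
under eq_bigr => t _ do rewrite dec.
apply: le_trans (_ : \sum_(t : 'I_T) (#|{: design n L T}|%:R * qq R T m ^+ #|D :\ t|) / T%:R <= _).
  apply: ler_sum => t _; apply: ler_wpM2r; first by rewrite invr_ge0.
  exact: IH.
rewrite -mulr_suml -mulr_sumr -mulrA; apply: ler_wpM2l => //.
rewrite sum_cardD1 qqS; apply: step_ineq => //.
- by rewrite -[X in (_ <= X)%N](card_ord T) max_card.
- exact: qq_ge0.
- exact: qq_le1.
Qed.

Definition XS n L T (x : 'I_n) (J : {set 'I_L}) (X : design n L T) : {set 'I_T} :=
  [set X x j | j in J].

Lemma sum_cardU1 (R : realType) T (D : {set 'I_T}) (c : R) :
  \sum_(t : 'I_T) c ^+ #|t |: D| = #|D|%:R * c ^+ #|D| + (T - #|D|)%:R * c ^+ #|D|.+1.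
Proof.
rewrite (bigID (mem D)) /=.
rewrite (eq_bigr (fun _ => c ^+ #|D|)); last first.
  by move=> t tD; rewrite cardsU1 tD.
rewrite [X in _ + X](eq_bigr (fun _ => c ^+ #|D|.+1)); last first.
  by move=> t tD; rewrite cardsU1 tD.
rewrite !sumr_const !mulr_natl; congr (_ *+ _ + _ *+ _).
have h : (#|D| + #|[predC D]|)%N = T by rewrite cardC card_ord.
have -> : #|(fun i : 'I_T => i \notin D)| = #|[predC D]| by apply: eq_card => x; rewrite !inE.
move: h; set x := #|[predC D]|; set y := #|D|; lia.
Qed.

Lemma XS_upd n L T x (J : {set 'I_L}) (X : design n L T) j s :
  j \notin J -> XS x J (upd X x j s) = XS x J X.
Proof.
move=> jJ; apply: eq_in_imset => i iJ /=; rewrite upd_neq //.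
by apply/orP; right; apply: contraNneq jJ => <-.
Qed.

Lemma max_card_ord T (D : {set 'I_T}) : (#|D| <= T)%N.
Proof. by rewrite -[X in (_ <= X)%N](card_ord T) max_card. Qed.

Lemma step2 (R : realType) (T L d : nat) (q : R) : (0 < T)%N -> (d <= T)%N -> (d <= L)%N ->
  0 <= q ->
  (d%:R * q ^+ d + (T - d)%:R * q ^+ d.+1) / T%:R <= q ^+ d * (q + L%:R / T%:R).
Proof.
move=> T0 dT dL q0.
have Tp : 0 < T%:R :> R by rewrite ltr0n.
rewrite natrB // exprS.
have x0 : 0 <= q ^+ d by rewrite exprn_ge0.
set x := q ^+ d.
have dL' : d%:R <= L%:R :> R by rewrite ler_nat.
have d0 : 0 <= d%:R :> R by [].
rewrite ler_pdivrMr //.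
have -> : x * (q + L%:R / T%:R) * T%:R = x * q * T%:R + x * L%:R by field; rewrite gt_eqF.
have : 0 <= x * q * d%:R by rewrite !mulr_ge0.
have : x * d%:R <= x * L%:R by rewrite ler_wpM2l.
nra.
Qed.

Lemma claimB (R : realType) n L T (S : {set 'I_n * 'I_L}) (x : 'I_n) :
  (0 < T)%N -> (forall p, p \in S -> p.1 != x) ->
  forall m (J : {set 'I_L}) (D : {set 'I_T}), #|J| = m -> (#|D| + m <= L)%N ->
  \sum_(X : design n L T) (((D :|: XS x J X) \subset PS S X)%:R : R) <=
  #|{: design n L T}|%:R * qq R T #|S| ^+ #|D| * (qq R T #|S| + L%:R / T%:R) ^+ m.
Proof.
move=> T0 hx; elim=> [|m IH] J D Jm DL.
  have -> : J = finset.set0 by apply/eqP; rewrite -cards_eq0 Jm.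
  rewrite expr0 mulr1.
  under eq_bigr => X _ do rewrite /XS imset0 finset.setU0.
  exact: claimA.
have [j jJ] : exists j, j \in J.
  by apply/finset.set0Pn; rewrite -card_gt0 Jm.
set J' := J :\ j.
have J'm : #|J'| = m by move: Jm; rewrite (cardsD1 j J) jJ add1n => -[].
have jJ' : j \notin J' by rewrite !inE eqxx.
have XSe : forall X : design n L T, D :|: XS x J X = (X x j |: D) :|: XS x J' X.
  by move=> X; rewrite /XS -{1}(finset.setD1K jJ) imsetU1 finset.setUA (finset.setUC D).
set q := qq R T #|S|.
under eq_bigr => X _ do rewrite XSe (ind_split (fun t => ((((t |: D) :|: XS x J' X) \subset PS S X)%:R : R)) (X x j)).
rewrite exchange_big /=.
have dec : forall t, \sum_(X : design n L T) ((X x j == t)%:R * ((((t |: D) :|: XS x J' X) \subset PS S X)%:R : R)) = (\sum_(X : design n L T) ((((t |: D) :|: XS x J' X) \subset PS S X)%:R : R)) / T%:R.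
  move=> t; apply: decouple => X s; rewrite PS_upd ?XS_upd //.
  by apply/negP => /hx /=; rewrite eqxx.
under eq_bigr => t _ do rewrite dec.
apply: le_trans (_ : \sum_(t : 'I_T) (#|{: design n L T}|%:R * q ^+ #|t |: D| * (q + L%:R / T%:R) ^+ m) / T%:R <= _).
  apply: ler_sum => t _; apply: ler_wpM2r; first by rewrite invr_ge0.
  apply: IH => //; rewrite cardsU1; move: DL; case: (t \in D) => /=; lia.
have q0 : 0 <= q by apply: qq_ge0.
have r0 : 0 <= (q + L%:R / T%:R) ^+ m by rewrite exprn_ge0 // addr_ge0 // divr_ge0.
set N : R := #|design n L T|%:R.
set r := q + L%:R / T%:R.
rewrite (eq_bigr (fun t => (N * r ^+ m / T%:R) * q ^+ #|t |: D|)); last by move=> t _; rewrite /=; ring.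
rewrite -mulr_sumr sum_cardU1.
have st := @step2 R T L #|D| q T0 (max_card_ord D) (leq_trans (leq_addr _ _) DL) q0.
have N0 : 0 <= N by [].
have -> : N * r ^+ m / T%:R * (#|D|%:R * q ^+ #|D| + (T - #|D|)%:R * q ^+ #|D|.+1)
  = (N * r ^+ m) * ((#|D|%:R * q ^+ #|D| + (T - #|D|)%:R * q ^+ #|D|.+1) / T%:R) by ring.
apply: le_trans (ler_wpM2l (mulr_ge0 N0 r0) st) _.
by rewrite exprS le_eqVlt; apply/orP; left; apply/eqP; rewrite /r; ring.
Qed.

Definition cov n L T (X : design n L T) (K : {set 'I_n}) (x : 'I_n) : bool :=
  [forall t, in_test X x t ==> test_positive X K t].

Lemma cov_equiv n L T (X : design n L T) K x :
  cov X K x = (XS x (finset.setTfor _) X \subset PS (finset.setX K (finset.setTfor _)) X).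
Proof.
apply/forallP/fintype.subsetP => H t.
  move=> /imsetP [j _ ->]; have := H (X x j).
  rewrite /in_test /test_positive.
  have -> : [exists j0, X x j0 == X x j] by apply/existsP; exists j.
  move=> /= /existsP [y /andP [yK /existsP [i /eqP e]]].
  by apply/imsetP; exists (y, i) => //; rewrite inE yK inE.
apply/implyP => /existsP [j /eqP e].
have : t \in PS (finset.setX K (finset.setTfor _)) X by apply: H; apply/imsetP; exists j; rewrite ?inE.
move=> /imsetP [[y i] /setXP [yK _] /= ->].
by apply/existsP; exists y; rewrite yK /=; apply/existsP; exists i.
Qed.

Lemma fail_cov n L T (X : design n L T) K :
  comp_output X K != K -> exists x, (x \notin K) && cov X K x.
Proof.
move=> H. have : [exists x, (x \notin K) && cov X K x]; last by move/existsP. move: H; apply: contraNT => /existsPn H.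
apply/eqP/setP => y; rewrite inE; case yK: (y \in K).
  apply/forallP => t; apply/implyP => yt.
  by apply/existsP; exists y; rewrite yK.
by have := H y; rewrite yK /= => /negbTE.
Qed.

Lemma card_sumR (R : realType) (U : finType) (A : {set U}) :
  (#|A|%:R : R) = \sum_(u : U) ((u \in A)%:R : R).
Proof.
rewrite -sum1_card natr_sum big_mkcond /=; apply: eq_bigr => u _.
by case: (u \in A).
Qed.

Lemma cov_bound (R : realType) n k L T (K : {set 'I_n}) x : (0 < T)%N -> #|K| = k -> x \notin K ->
  \sum_(X : design n L T) ((cov X K x)%:R : R) <=
  #|{: design n L T}|%:R * (qq R T (k * L) + L%:R / T%:R) ^+ L.
Proof.
move=> T0 Kk xK.
set S := finset.setX K (finset.setTfor 'I_L).
have hS : #|S| = (k * L)%N by rewrite cardsX cardsT card_ord Kk.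
have hx : forall p, p \in S -> p.1 != x.
  by move=> [y i] /finset.setXP [yK _] /=; apply: contraNneq xK => <-.
have := @claimB R n L T S x T0 hx L (finset.setTfor 'I_L) finset.set0.
rewrite cardsT card_ord cards0 expr0 mulr1 hS => /(_ erefl (leqnn _)).
apply: le_trans; apply: ler_sum => X _.
by rewrite cov_equiv finset.set0U.
Qed.

Lemma prob_bound (R : realType) n k L T : (0 < T)%N -> (k <= n)%N ->
  0 <= 1 - comp_success_prob R n k L T <= n%:R * (qq R T (k * L) + L%:R / T%:R) ^+ L.
Proof.
move=> T0 kn.
set rho := (qq R T (k * L) + L%:R / T%:R) ^+ L.
rewrite /comp_success_prob.
set A := [set K : {set 'I_n} | #|K| == k].
set Ss := [set p : {set 'I_n} * design n L T | _].
set N := #|finset.setTfor (design n L T)|.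
have Np : (0 < N)%N.
  by rewrite /N cardsT; apply/card_gt0P; exists [ffun _ => [ffun _ => Ordinal T0]].
have Cp : (0 < #|A|)%N by rewrite card_draws card_ord bin_gt0.
have CNp : 0 < (#|A| * N)%:R :> R by rewrite ltr0n muln_gt0 Cp Np.
have E1 : (#|Ss|%:R : R) = \sum_(K : {set 'I_n}) \sum_(X : design n L T)
     (((K \in A) && (comp_output X K == K))%:R : R).
  rewrite (@card_sumR R _ Ss) pair_bigA /=; apply: eq_bigr => -[K X] _.
  by rewrite !inE.
have E2 : ((#|A| * N)%:R : R) = \sum_(K : {set 'I_n}) \sum_(X : design n L T) ((K \in A)%:R : R).
  rewrite natrM (@card_sumR R _ A) /N (@card_sumR R _ (finset.setTfor _)) mulr_suml; apply: eq_bigr => K _.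
  rewrite mulr_sumr; apply: eq_bigr => X _; by rewrite finset.in_setT mulr1.
have Nd : (#|{: design n L T}|%:R : R) = N%:R by rewrite /N cardsT.
have key : 0 <= ((#|A| * N)%:R - #|Ss|%:R : R) <= #|A|%:R * (N%:R * (n%:R * rho)).
  rewrite E1 E2 -sumrB (@card_sumR R _ A) mulr_suml.
  apply/andP; split.
    apply: sumr_ge0 => K _; rewrite -sumrB; apply: sumr_ge0 => X _.
    by case: (K \in A); case: (_ == _); rewrite /= ?subrr ?subr0.
  apply: ler_sum => K _; rewrite -sumrB.
  case KA: (K \in A) => /=; last first.
    by rewrite big1 ?mul0r // => X _; rewrite subrr.
  have Kk : #|K| = k by move: KA; rewrite inE => /eqP.
  rewrite mul1r.
  apply: le_trans (_ : \sum_(X : design n L T) \sum_(x : 'I_n) (((x \notin K) && cov X K x)%:R : R) <= _).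
    apply: ler_sum => X _; case: eqP => [_ | /eqP ne]; first by rewrite subrr sumr_ge0.
    rewrite subr0; have [x /andP [xK cx]] := fail_cov ne.
    rewrite (bigD1 x) //= xK cx /= lerDl; exact: sumr_ge0.
  rewrite exchange_big /=.
  apply: le_trans (_ : \sum_(x : 'I_n) (N%:R * rho) <= _); last first.
    by rewrite sumr_const card_ord -[_ *+ n]mulr_natl mulrCA.
  apply: ler_sum => x _; case xK: (x \in K) => /=.
    rewrite big1 //; by rewrite mulr_ge0 // exprn_ge0 // addr_ge0 ?divr_ge0 ?qq_ge0.
  by rewrite -Nd /rho; apply: cov_bound => //; rewrite xK.
have -> : 1 - #|Ss|%:R / (#|A| * N)%:R = ((#|A| * N)%:R - #|Ss|%:R) / (#|A| * N)%:R :> R.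
  by rewrite mulrBl divff // gt_eqF.
case/andP: key => k0 k1; apply/andP; split; first by rewrite divr_ge0 // ltW.
rewrite ler_pdivrMr // natrM; rewrite natrM in k1; apply: le_trans k1 _.
by rewrite le_eqVlt; apply/orP; left; apply/eqP; ring.
Qed.

Lemma expR_ln2 (R : realType) : expR (- ln (2 : R)) = 2^-1.
Proof. by rewrite expRN lnK // posrE. Qed.

Lemma ln2_gt0 (R : realType) : 0 < ln (2 : R).
Proof. by apply: ln_gt0; rewrite ltr1n. Qed.

Lemma ln2_le1 (R : realType) : ln (2 : R) <= 1.
Proof.
rewrite -(@ler_expR R) lnK ?posrE //; apply: le_trans (expR_ge1Dx 1); lra.
Qed.

Lemma q_bound (R : realType) (l2 : R) (T m : nat) : expR (- l2) = 2^-1 -> 0 < l2 -> (2 <= T)%N -> m%:R <= T%:R * l2 ->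
  qq R T m <= 2^-1 + l2 / (2 * (T%:R - 1)).
Proof.
move=> el2 l2p T2 mT.
have T2' : 2 <= T%:R :> R by rewrite (ler_nat R 2).
set s := T%:R - 1 : R.
have s1 : 1 <= s by rewrite /s; lra.
have s0 : 0 < s by lra.
have e1 : expR (- s^-1) <= 1 - T%:R^-1.
  have hsT : s + 1 = T%:R by rewrite /s subrK.
  have T0 : T%:R != 0 :> R by rewrite gt_eqF //; lra.
  rewrite expRN -[X in _ <= X](_ : s / (s + 1) = _); last first.
    by rewrite hsT {1}/s mulrBl divff // mul1r.
  have -> : s / (s + 1) = ((s + 1) / s)^-1 by rewrite invf_div.
  have p1 : 0 < (s + 1) / s by rewrite divr_gt0 // addr_gt0.
  rewrite lef_pV2 ?posrE ?expR_gt0 //.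
  have -> : (s + 1) / s = 1 + s^-1 by rewrite mulrDl divff ?gt_eqF // mul1r.
  exact: expR_ge1Dx.
have e2 : expR (- (m%:R / s)) <= (1 - T%:R^-1) ^+ m.
  have -> : - (m%:R / s) = m%:R * (- s^-1) by rewrite mulrN.
  rewrite expRM_natl; apply: (lerXn2r m) => //; rewrite ?nnegrE ?expR_ge0 //.
  apply: le_trans e1; exact: expR_ge0.
have e3 : expR (- (T%:R * l2 / s)) <= expR (- (m%:R / s)).
  by rewrite ler_expR lerN2 ler_pM2r ?invr_gt0.
have e4 : - (T%:R * l2 / s) = - l2 + - (l2 / s).
  by rewrite -[T%:R](subrK 1) -/s; field; rewrite gt_eqF.
have e5 : 1 - l2 / s <= expR (- (l2 / s)).
  by apply: le_trans (expR_ge1Dx _).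
rewrite e4 expRD el2 in e3.
rewrite /qq.
have h : 2^-1 * (1 - l2 / s) <= (1 - T%:R^-1) ^+ m.
  apply: le_trans e2; apply: le_trans e3; rewrite ler_pM2l //; lra.
have -> : l2 / (2 * s) = 2^-1 * (l2 / s) by field; rewrite gt_eqF.
lra.
Qed.

Lemma ln_facts (R : realType) (n : nat) : 1 <= ln (n%:R : R) ->
  0 < (n%:R : R) /\ ln (n%:R : R) < n%:R /\ (ln (n%:R : R) / 2) ^+ 2 <= n%:R.
Proof.
move=> y1.
have x0 : 0 < (n%:R : R).
  rewrite ltNge; apply/negP => x0; move: y1; rewrite ln0 //; lra.
split => //; split; first exact: ln_sublinear.
set y := ln (n%:R : R).
have -> : (n%:R : R) = expR (2%:R * (y / 2)) by rewrite mulrC mulfVK ?pnatr_eq0 // lnK.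
rewrite expRM_natl; apply: lerXn2r; rewrite ?nnegrE ?expR_ge0 ?divr_ge0 //; first exact: le_trans y1.
apply: le_trans (expR_ge1Dx _); lra.
Qed.

Lemma trunc_facts (R : realType) (r : R) : 0 <= r -> (Num.truncn r)%:R <= r /\ r < (Num.truncn r)%:R + 1.
Proof. by move=> r0; have /andP [h1 h2] := truncn_itv r0; split => //; rewrite natr1. Qed.

Lemma eventually_small (R : realType) (lam eps : R) : 0 < lam -> 0 < eps ->
  forall e : R, 0 < e -> exists M : R, forall n : nat, M <= ln (n%:R : R) ->
  [/\ (0 < Tdef lam eps n)%N, (kdef lam n <= n)%N &
   n%:R * (qq R (Tdef lam eps n) (kdef lam n * Ldef lam eps n) +
     (Ldef lam eps n)%:R / (Tdef lam eps n)%:R) ^+ (Ldef lam eps n) <= e].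
Proof.
move=> lam0 eps0 e e0.
have l20 := @ln2_gt0 R; have l21 := @ln2_le1 R.
rewrite /Ldef /Tdef /kdef.
move: (ln (2 : R)) l20 l21 (@expR_ln2 R) => l2 l20 l21 el2.
have [c Hc] : exists c : R, c = (1 + eps) * lam / l2 ^+ 2 by eexists.
have c0 : 0 < c by rewrite Hc divr_gt0 ?mulr_gt0 ?exprn_gt0 //; lra.
have [b Hb] : exists b : R, b = (1 + eps / 2) * l2 / (1 + eps) by eexists.
have b0 : 0 < b by rewrite Hb divr_gt0 ?mulr_gt0 //; lra.
have bl : b < l2.
  rewrite Hb ltr_pdivrMr; last lra.
  have : 0 < l2 * eps / 2 by rewrite divr_gt0 ?mulr_gt0.
  have -> : l2 * eps / 2 = l2 * (1 + eps) - (1 + eps / 2) * l2 by field.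
  lra.
have [g Hg] : exists g : R, g = expR (- b) - 2^-1 by eexists.
have g0 : 0 < g by rewrite Hg subr_gt0 -el2 ltr_expR ltrN2.
have hba : b * ((1 + eps) / l2) = 1 + eps / 2.
  rewrite Hb; field; rewrite gt_eqF //=; apply/eqP; lra.
have hac : c * l2 / lam = (1 + eps) / l2.
  by rewrite Hc; field; rewrite !gt_eqF.
have [C0 HC0] : exists C0 : R, C0 = l2 / lam + 1 by eexists.
exists (1 + lam + 4 * (2 + 2 / g) / lam + (3 + 1 / g) / c + 2 * `|b * C0 - ln e| / eps).
move=> n hy.
have gi : 0 <= 1 / g by rewrite divr_ge0 // ltW.
have gi2 : 0 <= 2 / g by rewrite divr_ge0 // ltW.
have t1 : 0 <= 4 * (2 + 2 / g) / lam.
  apply: divr_ge0; last exact: ltW. apply: mulr_ge0 => //; lra.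
have t2 : 0 <= (3 + 1 / g) / c.
  apply: divr_ge0; last exact: ltW. lra.
have t3 : 0 <= 2 * `|b * C0 - ln e| / eps.
  apply: divr_ge0; last exact: ltW. by apply: mulr_ge0.
have y1 : 1 <= ln (n%:R : R) by lra.
have [x0 [yx xy]] := ln_facts y1.
have ylam : lam <= ln (n%:R : R) by lra.
have yk : 4 * (2 + 2 / g) / lam <= ln (n%:R : R) by lra.
have yT : (3 + 1 / g) / c <= ln (n%:R : R) by lra.
have ye : 2 * `|b * C0 - ln e| / eps <= ln (n%:R : R) by lra.
have xe : (n%:R : R) = expR (ln (n%:R : R)) by rewrite lnK // posrE.
move: (ln (n%:R : R)) xe y1 yx xy ylam yk yT ye => y xe y1 yx xy ylam yk yT ye {hy t1 t2 t3}.
rewrite -Hc.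
have y0 : 0 < y by lra.
have kr0 : 0 <= lam * n%:R / y by apply: divr_ge0; [apply: mulr_ge0|]; apply: ltW.
have [hk1 hk2] := trunc_facts kr0.
have krx : lam * n%:R / y <= n%:R.
  by rewrite ler_pdivrMr // [X in _ <= X]mulrC ler_pM2r.
have hkn : (Num.truncn (lam * n%:R / y) <= n)%N.
  by rewrite -(ler_nat R); apply: le_trans hk1 krx.
have kry : lam * y / 4 <= lam * n%:R / y.
  have -> : lam * y / 4 = lam * (y / 2) ^+ 2 / y by field; rewrite gt_eqF.
  apply: ler_wpM2r; first by rewrite invr_ge0 ltW.
  by apply: ler_wpM2l => //; exact: ltW.
have kg : 2 + 2 / g <= lam * y / 4.
  have : 4 * (2 + 2 / g) <= y * lam by rewrite -ler_pdivrMr.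
  lra.
move: (Num.truncn (lam * n%:R / y)) hk1 hk2 hkn => k hk1 hk2 hkn.
have k1 : 1 <= k%:R :> R by lra.
have kg2 : 2 / g <= k%:R by lra.
have k0 : 0 < k%:R :> R by lra.
have Tr0 : 0 <= c * n%:R by apply: mulr_ge0; apply: ltW.
have [hT1 hT2] := trunc_facts Tr0.
have Tcy : 3 + 1 / g <= c * y by rewrite [c * y]mulrC -ler_pdivrMr.
have cxy : c * y <= c * n%:R by rewrite ler_pM2l // ltW.
move: (Num.truncn (c * n%:R)) hT1 hT2 => T hT1 hT2.
have T2 : 2 + 1 / g < T%:R by lra.
have T2n : (2 <= T)%N by rewrite -(ler_nat R); lra.
split => //; first by apply: leq_trans T2n.
have T0 : 0 < T%:R :> R by lra.
have Lr0 : 0 <= T%:R * l2 / k%:R by apply: divr_ge0; [apply: mulr_ge0|]; apply: ltW.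
have [hL1 hL2] := trunc_facts Lr0.
have hkL : (k * Num.truncn (T%:R * l2 / k%:R))%:R <= T%:R * l2.
  rewrite natrM; apply: le_trans (ler_wpM2l (ltW k0) hL1) _.
  by rewrite [k%:R * _]mulrC divfK ?gt_eqF.
have Lr1 : T%:R * l2 * y / (lam * n%:R) <= T%:R * l2 / k%:R.
  have -> : T%:R * l2 * y / (lam * n%:R) = T%:R * l2 / (lam * n%:R / y).
    by field; rewrite !gt_eqF.
  apply: ler_wpM2l; first by apply: mulr_ge0; apply: ltW.
  by rewrite lef_pV2 ?posrE // divr_gt0 // mulr_gt0.
have Lr2 : (c * n%:R - 1) * l2 * y / (lam * n%:R) <= T%:R * l2 * y / (lam * n%:R).
  apply: ler_wpM2r; first by rewrite invr_ge0 mulr_ge0 // ltW.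
  apply: ler_wpM2r; first exact: ltW.
  apply: ler_wpM2r; first exact: ltW.
  lra.
have Lr3 : (c * n%:R - 1) * l2 * y / (lam * n%:R) = (1 + eps) / l2 * y - l2 / lam * (y / n%:R).
  rewrite -hac; field; apply/andP; split; rewrite gt_eqF //.
have yx1 : y / n%:R <= 1 by rewrite ler_pdivrMr // mul1r ltW.
have Lr4 : l2 / lam * (y / n%:R) <= l2 / lam.
  rewrite -[X in _ <= X]mulr1; apply: ler_wpM2l => //; apply: divr_ge0; apply: ltW => //.
have hLlow : (1 + eps) / l2 * y - C0 <= (Num.truncn (T%:R * l2 / k%:R))%:R.
  rewrite HC0; lra.
have hLup : (Num.truncn (T%:R * l2 / k%:R))%:R / T%:R <= l2 / k%:R.
  rewrite ler_pdivrMr //; apply: le_trans hL1 _.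
  by rewrite le_eqVlt; apply/orP; left; apply/eqP; ring.
move: (Num.truncn (T%:R * l2 / k%:R)) hL1 hL2 hkL hLlow hLup => L hL1 hL2 hkL hLlow hLup.
have hq := q_bound el2 l20 T2n hkL.
have gg : g * (1 / g) = 1 by field; rewrite gt_eqF.
have hq1 : l2 / (2 * (T%:R - 1)) <= g / 2.
  rewrite ler_pdivrMr; last lra.
  have : g * (1 / g) <= g * (T%:R - 1) by apply: ler_wpM2l; [exact: ltW | lra].
  lra.
have hL3 : l2 / k%:R <= g / 2.
  rewrite ler_pdivrMr //.
  have : g * (2 / g) <= g * k%:R by apply: ler_wpM2l; [exact: ltW | lra].
  have : g * (2 / g) = 2 by field; rewrite gt_eqF.
  lra.
have q0 : 0 <= qq R T (k * L) by apply: qq_ge0; apply: leq_trans T2n.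
have LT0 : 0 <= (L%:R / T%:R : R) by rewrite divr_ge0 // ltW.
have base : qq R T (k * L) + L%:R / T%:R <= expR (- b).
  have : expR (- b) = 2^-1 + g by rewrite Hg; ring.
  lra.
have rho : (qq R T (k * L) + L%:R / T%:R) ^+ L <= expR (L%:R * (- b)).
  rewrite expRM_natl; apply: lerXn2r => //; rewrite ?nnegrE ?expR_ge0 //; lra.
apply: le_trans (ler_wpM2l (ltW x0) rho) _.
rewrite xe -expRD -(@lnK R e) ?posrE // ler_expR.
have hbL : b * ((1 + eps) / l2 * y - C0) <= b * L%:R by apply: ler_wpM2l => //; exact: ltW.
have hbL2 : b * ((1 + eps) / l2 * y - C0) = (1 + eps / 2) * y - b * C0.
  by rewrite mulrBr mulrA hba.
have habs : b * C0 - ln e <= eps * y / 2.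
  have : `|b * C0 - ln e| <= eps * y / 2.
    move: ye; rewrite ler_pdivrMr // => ye; lra.
  move=> h; apply: le_trans h; exact: ler_norm.
have : L%:R * - b = - (b * L%:R) by ring.
lra.
Qed.

Unset Implicit Arguments. Set Strict Implicit. Set Printing Implicit Defensive.
Local Open Scope classical_set_scope.

Theorem theorem2 (R : realType) (lam eps : R) (hlam : 0 < lam) (heps : 0 < eps) :
  comp_prob lam eps n @[n --> \oo] --> (1 : R).
Proof.
apply/cvgrPdist_le => e e0.
have [M HM] := eventually_small hlam heps e0.
exists (Num.truncn (expR M)).+1 => // n /= hn.
have hn' : expR M <= (n%:R : R).
  apply: ltW; apply: lt_le_trans (truncnS_gt _) _; by rewrite ler_nat.
have hM : M <= ln (n%:R : R).
  rewrite -ler_expR lnK //; rewrite posrE; apply: lt_le_trans hn'; exact: expR_gt0.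
have [T0 kn bnd] := HM n hM.
have /andP [p0 p1] := prob_bound R (Ldef lam eps n) T0 kn.
rewrite /comp_prob ger0_norm //; exact: le_trans p1 bnd.
Qed.
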